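(* Let $R$ be a finitely generated integral $\mathbb{K}$-algebra with an effective, pointed grading by a finitely generated abelian group $K$, let $(\pi,\mathrm{id}_K)\colon S=\mathbb{K}[T_1,\dots,T_r]\to R$ be a minimal presentation, $I:=\ker\pi$, $G:=\operatorname{Aut}_K(S)$, $W:=\bigoplus_{u\in\Omega_I}S_u$ and $I_W:=I\cap W$. Then $I_W$ generates the ideal $I$, and $$\operatorname{Stab}_I(G)=\operatorname{Stab}_{I_W}(G)=\{g\in G;\ g\cdot I_W=I_W\}.$$
   Context: $\mathbb{K}$ algebraically closed of characteristic zero. $\operatorname{Aut}_K(S)$ is the group of graded automorphisms $(\varphi,\psi)$ of $S$, acting by $f\mapsto\varphi(f)$; $\operatorname{Stab}_N(G)=\{g\in G;\ g\cdot N=N\}$. Effective/pointed: the weight monoid $\omega(R)=\{w;R_w\ne0\}$ generates $K$, $R_0=\mathbb{K}$ and the cone generated by $\omega(R)$ in $K\otimes\mathbb{Q}$ contains no line. Minimal presentation: graded epimorphism $(\pi,\kappa)$ from a $K$-graded polynomial ring with homogeneous variables, $\kappa$ a group isomorphism, $\ker\pi\subseteq\langle T_1,\dots,T_r\rangle^2$. $w'\le w$ iff $w-w'\in\omega(S)$; $\Omega_I:=\{w\in K;\ I_w\not\subseteq I_{<w}\}$ with $I_{<w}$ the ideal of $S$ generated by all $I_{w'}=I\cap S_{w'}$, $w'<w$. *)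

(* Defs.v *)
From HB Require Import structures.
From mathcomp Require Import all_boot all_order all_algebra.
From mathcomp Require Import mpoly.
Set Implicit Arguments. Unset Strict Implicit. Unset Printing Implicit Defensive.
Import GRing.Theory.
Local Open Scope ring_scope.

Section Grading.
Variables (F : closedFieldType) (K : zmodType) (r : nat) (deg : 'I_r -> K).

Local Notation PS := ({mpoly F[r]}).

Definition kdeg (m : 'X_{1..r}) : K := \sum_(i < r) deg i *+ m i.

(* f lies in the homogeneous component S_w (0 lies in every S_w) *)
Definition khomog (w : K) (f : PS) : Prop := forall m, m \in msupp f -> kdeg m = w.

Definition fg_group : Prop :=
  exists s : seq K, forall x : K, exists c : seq int,
    x = \sum_(i < size s) s`_i *~ c`_i.

Definition is_ideal (I : PS -> Prop) : Prop :=
  [/\ I 0, (forall f g, I f -> I g -> I (f + g)) & (forall f g, I g -> I (f * g))].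

Definition is_prime_ideal (I : PS -> Prop) : Prop :=
  [/\ is_ideal I, ~ I 1 & forall f g, I (f * g) -> I f \/ I g].

Definition gen_ideal (A : PS -> Prop) (f : PS) : Prop :=
  exists s : seq (PS * PS), (forall p, p \in s -> A p.2) /\
    f = \sum_(p <- s) p.1 * p.2.

Definition homog_ideal (I : PS -> Prop) : Prop :=
  forall f, I f -> forall w, I (\sum_(m <- msupp f | kdeg m == w) f@_m *: 'X_[m]).

Definition in_irrel_sq (f : PS) : Prop :=
  exists c : 'I_r -> 'I_r -> PS, f = \sum_(i < r) \sum_(j < r) c i j * 'X_i * 'X_j.

(* weight monoid of R = S/I : w with R_w <> 0 *)
Definition omegaR (I : PS -> Prop) (w : K) : Prop := exists f, khomog w f /\ ~ I f.

Definition omegaS (w : K) : Prop := exists f : PS, khomog w f /\ f != 0.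

(* x (x) 1 in K (x) Q lies in the cone generated by a set A of weights:
   m x = sum a_i w_i in K (x) Q with m > 0, a_i in N, w_i in A *)
Definition in_cone (A : K -> Prop) (x : K) : Prop :=
  exists (m : nat) (s : seq (nat * K)), (0 < m)%N /\ (forall p, p \in s -> A p.2) /\
    exists k : nat, (0 < k)%N /\
      (x *+ m - \sum_(p <- s) p.2 *+ p.1) *+ k = 0.

Definition torsion (x : K) : Prop := exists k : nat, (0 < k)%N /\ x *+ k = 0.

Definition effective_pointed (I : PS -> Prop) : Prop :=
  [/\ (forall x : K, exists s : seq (int * K), (forall p, p \in s -> omegaR I p.2) /\
          x = \sum_(p <- s) p.2 *~ p.1),
      (forall f, khomog 0 f -> exists c : F, I (f - c%:MP))
    & (forall x : K, in_cone (omegaR I) x -> in_cone (omegaR I) (- x) -> torsion x)].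

Definition wle (w' w : K) : Prop := omegaS (w - w').
Definition wlt (w' w : K) : Prop := wle w' w /\ w' <> w.

Definition Icomp (I : PS -> Prop) (w : K) (f : PS) : Prop := I f /\ khomog w f.

Definition Ilt (I : PS -> Prop) (w : K) : PS -> Prop :=
  gen_ideal (fun f => exists w', wlt w' w /\ Icomp I w' f).

Definition OmegaI (I : PS -> Prop) (w : K) : Prop :=
  exists f, Icomp I w f /\ ~ Ilt I w f.

Definition inW (I : PS -> Prop) (f : PS) : Prop :=
  exists s : seq PS, (forall g, g \in s -> exists u, OmegaI I u /\ khomog u g) /\
    f = \sum_(g <- s) g.

Definition IW (I : PS -> Prop) (f : PS) : Prop := I f /\ inW I f.

Definition graded_aut (phi : PS -> PS) (psi : K -> K) : Prop :=
  [/\ [/\ phi 1 = 1, (forall f g, phi (f + g) = phi f + phi g),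
         (forall f g, phi (f * g) = phi f * phi g),
         (forall (c : F) f, phi (c *: f) = c *: phi f) & bijective phi],
      (forall x y, psi (x + y) = psi x + psi y) /\ bijective psi
    & forall w f, khomog (psi w) f <-> exists g, khomog w g /\ phi g = f].

Definition stabilizes (phi : PS -> PS) (N : PS -> Prop) : Prop :=
  forall f, N f <-> exists g, N g /\ phi g = f.

End Grading.

(* Main.v *)
Require Import Defs.
From HB Require Import structures.
From mathcomp Require Import all_boot all_order all_algebra.
From mathcomp Require Import mpoly.
From Stdlib Require Import Classical.
Import GRing.Theory.
Local Open Scope ring_scope.
Set Implicit Arguments. Unset Strict Implicit. Unset Printing Implicit Defensive.


Lemma fin_bound (T : finType) (P : T -> nat -> Prop) :
  (forall x B B', P x B -> (B <= B')%N -> P x B') ->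
  (forall x, exists B, P x B) -> exists B, forall x, P x B.
Proof.
move=> mono ex.
suff: forall s : seq T, exists B, forall x, x \in s -> P x B.
  by case/(_ (enum T)) => B HB; exists B => x; apply: HB; rewrite mem_enum.
elim=> [|y s [B HB]]; first by exists 0%N.
have [By Hy] := ex y.
exists (maxn B By) => x; rewrite inE => /orP [/eqP->|xs].
  by apply: mono Hy _; rewrite leq_maxr.
by apply: mono (HB x xs) _; rewrite leq_maxl.
Qed.

Lemma mnm_le_mdeg r (m : 'X_{1..r}) j : (m j <= mdeg m)%N.
Proof. by rewrite mdegE (bigD1 j) //= leq_addr. Qed.

Lemma antichain_bound (r : nat) (k : nat) : forall (J : {set 'I_r}) (A : 'X_{1..r} -> Prop),
  (#|J| <= k)%N ->
  (forall a b, A a -> A b -> forall j, j \notin J -> a j = b j) ->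
  (forall a b, A a -> A b -> (forall j, (a j <= b j)%N) -> a = b) ->
  exists B, forall a, A a -> forall j, (a j <= B)%N.
Proof.
elim: k => [|k IH] J A cJ Hoff Hac;
  (case: (classic (exists a, A a)) => [[a0 Aa0]|nA]; last first;
   [by exists 0%N => a Aa; case: nA; exists a|]).
  exists (mdeg a0) => a Aa j.
  have -> : a = a0.
    apply/mnmP => j'; apply: Hoff => //.
    by move: cJ; rewrite leqn0 cards_eq0 => /eqP ->; rewrite inE.
  exact: mnm_le_mdeg.
pose N := (mdeg a0).+1.
pose P (x : 'I_r * 'I_N) B := forall b, A b -> b x.1 = x.2 :> nat ->
   (x.2 < a0 x.1)%N -> forall j, (b j <= B)%N.
have mono : forall x B B', P x B -> (B <= B')%N -> P x B'.
  by move=> x B B' H le b Ab e l j; apply: leq_trans (H b Ab e l j) le.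
have ex : forall x, exists B, P x B.
  move=> [i c] /=.
  case iJ: (i \in J); last first.
    exists 0%N => b Ab /= e l; exfalso.
    by move: l; rewrite -e (Hoff b a0) ?iJ // ltnn.
  have [|||B HB] := IH (J :\ i) (fun b => A b /\ b i = c).
  - by move: cJ; rewrite (cardsD1 i J) iJ.
  - move=> a b [Aa ea] [Ab eb] j; rewrite in_setD1 negb_and negbK.
    case/orP => [/eqP ->|jJ]; first by rewrite ea eb.
    exact: Hoff.
  - by move=> a b [Aa _] [Ab _]; apply: Hac.
  by exists B => b Ab /= e _; apply: HB.
have [Bf HBf] := fin_bound mono ex.
exists (maxn Bf (mdeg a0)) => a Aa j.
case: (classic (forall j, (a0 j <= a j)%N)) => [le|].
  have <- : a0 = a by apply: Hac.
  by rewrite leq_max mnm_le_mdeg orbT.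
move/not_all_ex_not => [i /negP]; rewrite -ltnNge => lt.
have lN : (a i < N)%N by rewrite /N ltnS (leq_trans (ltnW lt)) ?mnm_le_mdeg.
by rewrite leq_max (HBf (i, Ordinal lN) a Aa erefl lt j).
Qed.

Lemma kdegD (K : zmodType) r (deg : 'I_r -> K) m1 m2 :
  kdeg deg (m1 + m2)%MM = kdeg deg m1 + kdeg deg m2.
Proof. rewrite /kdeg -big_split /=; apply: eq_bigr => i _; by rewrite mnmDE mulrnDr. Qed.

Lemma kdeg0 (K : zmodType) r (deg : 'I_r -> K) : kdeg deg 0%MM = 0.
Proof. by rewrite /kdeg big1 // => i _; rewrite mnm0E mulr0n. Qed.

Lemma prime_prod (F : closedFieldType) r (I : {mpoly F[r]} -> Prop) (T : eqType)
  (s : seq T) (G : T -> {mpoly F[r]}) :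
  is_prime_ideal I -> I (\prod_(x <- s) G x) -> exists2 x, x \in s & I (G x).
Proof.
move=> [_ nI1 Ipr]; elim: s => [|y s IH]; first by rewrite big_nil.
rewrite big_cons => /Ipr [Iy|/IH [x xs Ix]]; first by exists y; rewrite ?mem_head.
by exists x; rewrite // inE xs orbT.
Qed.

Lemma prime_pow (F : closedFieldType) r (I : {mpoly F[r]} -> Prop) p k :
  is_prime_ideal I -> I (p ^+ k) -> I p.
Proof.
move=> [_ nI1 Ipr]; elim: k => [|k IH]; first by rewrite expr0.
by rewrite exprS => /Ipr [//|/IH].
Qed.

Lemma kdeg_eq0 (F : closedFieldType) (K : zmodType) r (deg : 'I_r -> K)
  (I : {mpoly F[r]} -> Prop) :
  is_prime_ideal I -> effective_pointed deg I -> (forall f, I f -> in_irrel_sq f) ->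
  forall u, kdeg deg u = 0 -> u = 0%MM.
Proof.
move=> Ip [_ Hc _] Hirr u ku.
apply: NNPP => nu.
have [i ui] : exists i, u i <> 0%N.
  apply: not_all_ex_not => H; apply: nu; apply/mnmP => i; by rewrite mnm0E H.
have hX : khomog deg 0 ('X_[u] : {mpoly F[r]}).
  by move=> m; rewrite msuppX inE => /eqP ->.
have [c Ic] := Hc _ hX.
have c0 : c = 0.
  have [cc e] := Hirr _ Ic.
  have := congr1 (meval (fun _ => (0 : F))) e.
  rewrite mevalB mevalX mevalC (bigD1 i) //= expr0n (negbTE (introN eqP ui)) mul0r.
  rewrite rmorph_sum big1 ?sub0r => [/eqP|j _]; first by rewrite oppr_eq0 => /eqP.
  by rewrite rmorph_sum big1 // => k _; rewrite !rmorphM /= !mevalXU !mulr0.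
move: Ic; rewrite c0 subr0 mpolyXE_id => /(prime_prod Ip) [j _ /(prime_pow Ip) Ij].
have [cc e] := Hirr _ Ij.
pose Phi := mmap (@polyC F) (fun _ : 'I_r => ('X : {poly F})).
have := congr1 Phi e.
rewrite /Phi mmapX mmap1U rmorph_sum.
under eq_bigr do rewrite rmorph_sum.
under eq_bigr do under eq_bigr do rewrite !rmorphM /= !mmapX !mmap1U -mulrA mulrC -mulrA.
under eq_bigr do rewrite -mulr_sumr.
rewrite -mulr_sumr -[X in X = _ -> _](mulr1 'X) => /(mulfI (negbT (polyX_eq0 _))).
under eq_bigr do rewrite -mulr_sumr.
rewrite -mulr_sumr.
move/(congr1 (horner^~ 0)); rewrite hornerM hornerX mul0r hornerC => /eqP.
by rewrite oner_eq0.
Qed.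


Lemma gen_base (F : closedFieldType) r (A : {mpoly F[r]} -> Prop) f : A f -> gen_ideal A f.
Proof. by move=> Af; exists [:: (1, f)]; split; [move=> p; rewrite inE => /eqP ->|rewrite big_seq1 mul1r]. Qed.

Lemma gen0 (F : closedFieldType) r (A : {mpoly F[r]} -> Prop) : gen_ideal A 0.
Proof. by exists [::]; split => //; rewrite big_nil. Qed.

Lemma genD (F : closedFieldType) r (A : {mpoly F[r]} -> Prop) f g :
  gen_ideal A f -> gen_ideal A g -> gen_ideal A (f + g).
Proof.
move=> [s [Hs ->]] [t [Ht ->]]; exists (s ++ t); split; last by rewrite big_cat.
by move=> p; rewrite mem_cat => /orP [/Hs|/Ht].
Qed.

Lemma genM (F : closedFieldType) r (A : {mpoly F[r]} -> Prop) a f :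
  gen_ideal A f -> gen_ideal A (a * f).
Proof.
move=> [s [Hs ->]]; exists [seq (a * p.1, p.2) | p <- s]; split.
  move=> p /mapP [q qs ->] /=. exact: Hs.
by rewrite big_map mulr_sumr; apply: eq_bigr => p _; rewrite mulrA.
Qed.

Lemma gen_sum (F : closedFieldType) r (A : {mpoly F[r]} -> Prop) (T : Type) (s : seq T) (G : T -> {mpoly F[r]}) :
  (forall x, gen_ideal A (G x)) -> gen_ideal A (\sum_(x <- s) G x).
Proof. move=> H; elim: s => [|x s IH]; rewrite ?big_nil ?big_cons; [exact: gen0|exact: genD]. Qed.

Lemma gen_trans (F : closedFieldType) r (A B : {mpoly F[r]} -> Prop) f :
  (forall g, A g -> gen_ideal B g) -> gen_ideal A f -> gen_ideal B f.
Proof.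
move=> H [s [Hs ->]]; rewrite big_seq.
elim/big_ind: _ => [|x y|p ps]; [exact: gen0|exact: genD|exact/genM/H/Hs].
Qed.

Lemma gen_sub (F : closedFieldType) r (I A : {mpoly F[r]} -> Prop) f :
  is_ideal I -> (forall g, A g -> I g) -> gen_ideal A f -> I f.
Proof.
move=> [I0 ID IM] H [s [Hs ->]]; rewrite big_seq.
elim/big_ind: _ => // p /Hs /H; exact: IM.
Qed.

Lemma bound_exists (F : closedFieldType) (K : zmodType) r (deg : 'I_r -> K)
  (I : {mpoly F[r]} -> Prop) :
  is_prime_ideal I -> effective_pointed deg I -> (forall f, I f -> in_irrel_sq f) ->
  forall w, exists n, forall m, kdeg deg m = w -> (mdeg m < n)%N.
Proof.
move=> Ip Ie Ii w.
have [|||B HB] := antichain_bound (k := r) (J := setT) (A := fun m : 'X_{1..r} => kdeg deg m = w).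
- by rewrite cardsT card_ord.
- by move=> a b _ _ j; rewrite inE.
- move=> a b ka kb le.
  have le' : (a <= b)%MM by apply/mnm_lepP.
  have := submK le'; set u := (b - a)%MM => e.
  have ku : kdeg deg u = 0.
    by move: kb; rewrite -e kdegD ka => /eqP; rewrite -subr_eq0 addrK => /eqP.
  by rewrite -e (kdeg_eq0 Ip Ie Ii ku) add0m.
exists (\sum_(i < r) B).+1 => m km; rewrite ltnS mdegE.
by apply: leq_sum => i _; apply: HB.
Qed.

Lemma khomog0 (F : closedFieldType) (K : zmodType) r (deg : 'I_r -> K) w :
  khomog deg w (0 : {mpoly F[r]}).
Proof. by move=> m; rewrite mcoeff_msupp mcoeff0 eqxx. Qed.

Lemma claimC (F : closedFieldType) (K : zmodType) r (deg : 'I_r -> K)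
  (I : {mpoly F[r]} -> Prop) n : forall w f,
  (forall m, kdeg deg m = w -> (mdeg m < n)%N) -> Icomp deg I w f -> gen_ideal (IW deg I) f.
Proof.
elim: n => [|n IH] w f Hb [If Hf].
  have -> : f = 0.
    apply/mpolyP => m; rewrite mcoeff0; apply/eqP/negP => /negP nz.
    by have := Hb _ (Hf m _); rewrite mcoeff_msupp nz; move/(_ isT).
  exact: gen0.
case: (classic (Ilt deg I w f)) => [Hl|nl]; last first.
  apply: gen_base; split => //; exists [:: f]; split; last by rewrite big_seq1.
  move=> g; rewrite inE => /eqP ->; exists w; split => //.
  by exists f; split.
apply: gen_trans Hl => g [w' [[[h [hh hn]] ne] [Ig hg]]].
apply: (IH w'); last by split.
move=> m km.
have [mu mus] : exists mu, mu \in msupp h.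
  case e: (msupp h) => [|mu s]; last by exists mu; rewrite mem_head.
  by move: hn; rewrite (mpolyE h) e big_nil eqxx.
have kmu := hh _ mus.
have mu0 : mu != 0%MM.
  apply/eqP => e; move: kmu; rewrite e kdeg0 => /eqP; rewrite eq_sym subr_eq0 => /eqP e'.
  by apply: ne; rewrite e'.
have := Hb (m + mu)%MM; rewrite kdegD km kmu addrC subrK => /(_ erefl).
rewrite mdegD ltnS => lt.
apply: leq_trans lt; rewrite -addn1 leq_add2l lt0n mdeg_eq0 //.
Qed.

Definition kcomp (F : closedFieldType) (K : zmodType) r (deg : 'I_r -> K) w (f : {mpoly F[r]}) :=
  \sum_(m <- msupp f | kdeg deg m == w) f@_m *: 'X_[m].

Lemma kcomp_homog (F : closedFieldType) (K : zmodType) r (deg : 'I_r -> K) w (f : {mpoly F[r]}) :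
  khomog deg w (kcomp deg w f).
Proof.
move=> m; apply: contraTeq => ne; rewrite mcoeff_msupp negbK /kcomp raddf_sum /=.
rewrite big1 // => m' /eqP km'; rewrite mcoeffZ mcoeffX.
case: eqP => [e|_]; last by rewrite mulr0.
by move: ne; rewrite -e km' eqxx.
Qed.

Lemma partition_seq (T : eqType) (K : eqType) (V : nmodType) (g : T -> K) (G : T -> V) (s : seq T) :
  \sum_(x <- s) G x = \sum_(w <- undup (map g s)) \sum_(x <- s | g x == w) G x.
Proof.
rewrite (exchange_big_dep xpredT) //=.
apply: eq_big_seq => x xs.
rewrite (eq_bigl (pred1 (g x))); last by move=> w; rewrite /= eq_sym.
by rewrite -big_filter filter_pred1_uniq ?undup_uniq ?mem_undup ?map_f // big_seq1.
Qed.

Lemma kcomp_decomp (F : closedFieldType) (K : zmodType) r (deg : 'I_r -> K) (f : {mpoly F[r]}) :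
  f = \sum_(w <- undup (map (kdeg deg) (msupp f))) kcomp deg w f.
Proof. by rewrite {1}(mpolyE f) (partition_seq (kdeg deg)). Qed.

Lemma part1 (F : closedFieldType) (K : zmodType) r (deg : 'I_r -> K)
  (I : {mpoly F[r]} -> Prop) :
  is_prime_ideal I -> homog_ideal deg I -> effective_pointed deg I ->
  (forall f, I f -> in_irrel_sq f) ->
  forall f, I f <-> gen_ideal (IW deg I) f.
Proof.
move=> Ip Ih Ie Ii f; split; last first.
  by case: Ip => Iid _ _; apply: gen_sub => // g [].
move=> If; rewrite (kcomp_decomp deg f); apply: gen_sum => w.
have [n Hn] := bound_exists Ip Ie Ii w.
apply: (claimC Hn); split; [exact: Ih | exact: kcomp_homog].
Qed.

Lemma addf0 (V : zmodType) (W : zmodType) (p : V -> W) :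
  (forall f g, p (f + g) = p f + p g) -> p 0 = 0.
Proof.
move=> pD; apply: (@addrI _ (p 0)); by rewrite -pD !addr0.
Qed.

Lemma addfN (V : zmodType) (W : zmodType) (p : V -> W) :
  (forall f g, p (f + g) = p f + p g) -> forall x, p (- x) = - p x.
Proof.
move=> pD x; apply/eqP; rewrite -addr_eq0 addrC -pD subrr.
by rewrite (addf0 pD).
Qed.

Lemma phi_gen (F : closedFieldType) r (p : {mpoly F[r]} -> {mpoly F[r]}) (A B : {mpoly F[r]} -> Prop) f :
  (forall f g, p (f + g) = p f + p g) -> (forall f g, p (f * g) = p f * p g) ->
  (forall g, A g -> B (p g)) -> gen_ideal A f -> gen_ideal B (p f).
Proof.
move=> pD pM H [s [Hs ->]]; exists [seq (p q.1, p q.2) | q <- s]; split.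
  by move=> q /mapP [q' q's ->] /=; apply/H/Hs.
rewrite big_map (big_morph p pD (addf0 pD)); apply: eq_bigr => q _; exact: pM.
Qed.

Lemma stab_img (F : closedFieldType) r (p : {mpoly F[r]} -> {mpoly F[r]}) N g :
  stabilizes p N -> N g -> N (p g).
Proof. by move=> H Ng; apply/H; exists g. Qed.

Lemma stab_inv (F : closedFieldType) r (p p' : {mpoly F[r]} -> {mpoly F[r]}) N :
  stabilizes p N -> cancel p p' -> cancel p' p -> stabilizes p' N.
Proof.
move=> H c1 c2 f; split.
  by move=> Nf; exists (p f); split; [apply/H; exists f|rewrite c1].
move=> [g [Ng <-]]; have /H [h [Nh e]] := Ng.
by rewrite -e c1.
Qed.

Lemma ga_inv (F : closedFieldType) (K : zmodType) r (deg : 'I_r -> K) (p : {mpoly F[r]} -> {mpoly F[r]}) psi :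
  graded_aut deg p psi -> exists p' psi', [/\ graded_aut deg p' psi',
    cancel p p', cancel p' p, cancel psi psi' & cancel psi' psi].
Proof.
move=> [[p1 pD pM pZ [p' c1 c2]] [psiD [psi' d1 d2]] ph].
exists p', psi'; split => //; split.
- split.
  + by rewrite -p1 c1.
  + by move=> f g; apply: (can_inj c1); rewrite pD !c2.
  + by move=> f g; apply: (can_inj c1); rewrite pM !c2.
  + by move=> c f; apply: (can_inj c1); rewrite pZ !c2.
  + by exists p.
- split; last by exists psi.
  by move=> x y; apply: (can_inj d1); rewrite psiD !d2.
- move=> w f; split.
  + move=> hf; exists (p f); split; last by rewrite c1.
    by rewrite -[w]d2; apply/ph; exists f.
  + move=> [g [hg <-]].
    have /ph [g' [hg' e]] : khomog deg (psi (psi' w)) g by rewrite d2.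
    by rewrite -e c1.
Qed.

Lemma ga_homog (F : closedFieldType) (K : zmodType) r (deg : 'I_r -> K) (p : {mpoly F[r]} -> {mpoly F[r]}) psi w (g : {mpoly F[r]}) :
  graded_aut deg p psi -> khomog deg w g -> khomog deg (psi w) (p g).
Proof. by move=> [_ _ ph] hg; apply/ph; exists g. Qed.

Lemma ga_wlt (F : closedFieldType) (K : zmodType) r (deg : 'I_r -> K) (p : {mpoly F[r]} -> {mpoly F[r]}) psi w' w :
  graded_aut deg p psi -> wlt F deg w' w -> wlt F deg (psi w') (psi w).
Proof.
move=> G [[h [hh hn]] ne]; have [[_ pD _ _ [p' c1 _]] [psiD [psi' d1 _]] ph] := G.
split.
  exists (p h); split.
    by rewrite -(addfN psiD) -psiD; apply: ga_homog G hh.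
  apply: contra hn => /eqP e; apply/eqP.
  by apply: (can_inj c1); rewrite e (addf0 pD).
by move=> e; apply: ne; rewrite -(d1 w') e d1.
Qed.

Lemma ga_Ilt (F : closedFieldType) (K : zmodType) r (deg : 'I_r -> K) (I : {mpoly F[r]} -> Prop) (p : {mpoly F[r]} -> {mpoly F[r]}) psi w f :
  graded_aut deg p psi -> (forall g, I g -> I (p g)) ->
  Ilt deg I w f -> Ilt deg I (psi w) (p f).
Proof.
move=> G HI; have [[_ pD pM _ _] _ _] := G.
apply: phi_gen => // g [w' [lt [Ig hg]]].
exists (psi w'); split; first exact: ga_wlt G lt.
by split; [apply: HI | apply: ga_homog G hg].
Qed.

Lemma ga_IW (F : closedFieldType) (K : zmodType) r (deg : 'I_r -> K) (I : {mpoly F[r]} -> Prop) (p : {mpoly F[r]} -> {mpoly F[r]}) psi g :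
  graded_aut deg p psi -> stabilizes p I -> IW deg I g -> IW deg I (p g).
Proof.
move=> G Hs [Ig [s [Hs' eg]]]; have [[_ pD _ _ _] _ _] := G.
have [p' [psi' [G' c1 c2 d1 d2]]] := ga_inv G.
have Hs2 := stab_inv Hs c1 c2.
split; first exact: stab_img Hs Ig.
rewrite eg.
exists [seq p h | h <- s]; split; last by rewrite big_map (big_morph p pD (addf0 pD)).
move=> h' /mapP [h hs ->]; have [u [[f [[If hf] nf]] hh]] := Hs' h hs.
exists (psi u); split; last exact: ga_homog G hh.
exists (p f); split; first by split; [apply: stab_img Hs If|apply: ga_homog G hf].
move=> /(ga_Ilt G' (fun g => stab_img (g := g) Hs2)); rewrite c1 d1; exact: nf.
Qed.

Unset Implicit Arguments. Set Strict Implicit.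

Theorem proposition2p8 (F : closedFieldType) (K : zmodType) (r : nat) (deg : 'I_r -> K)
  (I : {mpoly F[r]} -> Prop) :
  [pchar F] =i pred0 ->
  fg_group K ->
  is_prime_ideal I ->
  homog_ideal deg I ->
  effective_pointed deg I ->
  (forall f, I f -> in_irrel_sq f) ->
  (forall f, I f <-> gen_ideal (IW deg I) f) /\
  (forall (phi : {mpoly F[r]} -> {mpoly F[r]}) (psi : K -> K),
     graded_aut deg phi psi ->
     (stabilizes phi I <-> stabilizes phi (IW deg I))).
Proof.
move=> _ _ Ip Ih Ie Ii.
have P1 := part1 Ip Ih Ie Ii.
split => // p psi G.
have [[_ pD pM _ _] _ _] := G.
have [p' [psi' [G' c1 c2 d1 d2]]] := ga_inv G.
have [[_ pD' pM' _ _] _ _] := G'.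
split => Hs; have Hs2 := stab_inv Hs c1 c2; move=> f; split.
- move=> Wf; exists (p' f); split; [exact: ga_IW G' Hs2 Wf | exact: c2].
- by move=> [g [Wg <-]]; exact: ga_IW G Hs Wg.
- move=> If; exists (p' f); split; last exact: c2.
  apply/P1; apply: (phi_gen pD' pM' (fun g => stab_img (g := g) Hs2)).
  exact/P1.
- move=> [g [Ig <-]]; apply/P1; apply: (phi_gen pD pM (fun g => stab_img (g := g) Hs)).
  exact/P1.
Qed.
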